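(* Let $p$ be an idempotent in $(\beta\mathbb{N}, +)$, let $\langle C_n \rangle_{n=1}^\infty$ be a sequence of members of $p$, and let $\langle a_n \rangle_{n=1}^\infty$ be a sequence in $\mathbb{N}$. Then for each $n \in \mathbb{N}$ there exists a finite sequence $Y_n = \langle y_{n,j}\rangle_{j=1}^{a_n}$ in $\mathbb{N}$ of length $a_n$ with $\mathrm{FS}(Y_n) \subseteq C_n$, such that for every nonempty finite $F \subseteq \mathbb{N}$, $\sum_{n \in F} Y_n \subseteq C_{\min F}$.
   Context: $\beta\mathbb{N}$ is the set of ultrafilters on $\mathbb{N}$ with the extension of addition $p+q = \{A \subseteq \mathbb{N} : \{x : -x+A \in q\} \in p\}$, $-x+A=\{y: x+y\in A\}$; $p$ is idempotent if $p+p=p$. For a finite sequence $\langle x_n\rangle_{n=1}^k$, $\mathrm{FS}(\langle x_n\rangle_{n=1}^k) = \{\sum_{n\in H} x_n : \emptyset\neq H\subseteq\{1,\ldots,k\}\}$. For finite $F \subseteq \mathbb{N}$ and sequences $Y_n$, $\sum_{n \in F} Y_n = \{\sum_{n \in F} a_n : a_n \text{ is a term of } Y_n \text{ for each } n \in F\}$. *)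

(* Defs.v *)
(* The paper's N = {1,2,3,...}; we model subsets of N as
   predicates on nat, and ultrafilters on N as families of such predicates
   that contain the set of positive naturals (so they live on N). *)
From Stdlib Require Import Arith.

Definition is_ultrafilter (p : (nat -> Prop) -> Prop) : Prop :=
  p (fun n => 1 <= n) /\
  ~ p (fun _ => False) /\
  (forall A B : nat -> Prop, (forall x, A x -> B x) -> p A -> p B) /\
  (forall A B : nat -> Prop, p A -> p B -> p (fun x => A x /\ B x)) /\
  (forall A : nat -> Prop, p A \/ p (fun x => ~ A x)).

Definition shift_set (x : nat) (A : nat -> Prop) : nat -> Prop :=
  fun y => A (x + y).

Definition ultra_add (p q : (nat -> Prop) -> Prop) : (nat -> Prop) -> Prop :=
  fun A => p (fun x => 1 <= x /\ q (shift_set x A)).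

Definition idempotent (p : (nat -> Prop) -> Prop) : Prop :=
  forall A : nat -> Prop, ultra_add p p A <-> p A.

Fixpoint sum_1_to (n : nat) (f : nat -> nat) : nat :=
  match n with
  | 0 => 0
  | S m => sum_1_to m f + f (S m)
  end.

(* FS(<y_j>_{j=1}^k) ⊆ C: for every nonempty H ⊆ {1..k}
   (given by a boolean indicator), sum_{j in H} y_j ∈ C. *)
Definition FS_sub (k : nat) (y : nat -> nat) (C : nat -> Prop) : Prop :=
  forall H : nat -> bool,
    (exists j, 1 <= j <= k /\ H j = true) ->
    C (sum_1_to k (fun j => if H j then y j else 0)).

(* Main.v *)
Require Import Defs.
From Stdlib Require Import Arith Lia Classical ClassicalEpsilon.

Fixpoint sumf (lo l : nat) (f : nat -> nat) : nat :=
  match l with 0 => 0 | S l' => f lo + sumf (S lo) l' f end.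

Lemma sumf_last lo l f : sumf lo (S l) f = sumf lo l f + f (lo + l).
Proof.
  revert lo; induction l; intros lo; simpl.
  - now rewrite !Nat.add_0_r.
  - simpl in IHl. rewrite IHl. replace (S lo + l) with (lo + S l) by lia. lia.
Qed.

Lemma sum_1_to_sumf N f : sum_1_to N f = sumf 1 N f.
Proof.
  induction N; simpl; [reflexivity|]. rewrite IHN.
  change (sumf 1 N f + f (S N) = sumf 1 (S N) f). rewrite sumf_last. reflexivity.
Qed.

Lemma sumf_split lo l1 l2 f : sumf lo (l1 + l2) f = sumf lo l1 f + sumf (lo + l1) l2 f.
Proof.
  revert lo; induction l1; intros lo; simpl.
  - rewrite Nat.add_0_r; reflexivity.
  - rewrite IHl1. replace (S lo + l1) with (lo + S l1) by lia. lia.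
Qed.

Lemma sumf_zero lo l f : (forall k, lo <= k < lo + l -> f k = 0) -> sumf lo l f = 0.
Proof.
  revert lo; induction l; intros lo H; simpl; [reflexivity|].
  rewrite H by lia. rewrite IHl; [reflexivity|]. intros k Hk; apply H; lia.
Qed.

Lemma sumf_ge lo l f k : lo <= k < lo + l -> f k <= sumf lo l f.
Proof.
  revert lo; induction l; intros lo H; simpl; [lia|].
  destruct (Nat.eq_dec k lo). subst; lia.
  specialize (IHl (S lo) ltac:(lia)). lia.
Qed.

Section Construction.
Variable p : (nat -> Prop) -> Prop.
Hypothesis Hu : is_ultrafilter p.
Hypothesis Hi : idempotent p.

Lemma p_mono A B : (forall x, A x -> B x) -> p A -> p B.
Proof. destruct Hu as (_&_&H&_). apply H. Qed.
Lemma p_and A B : p A -> p B -> p (fun x => A x /\ B x).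
Proof. destruct Hu as (_&_&_&H&_). apply H. Qed.
Lemma p_pos : p (fun n => 1 <= n).
Proof. destruct Hu as (H&_). apply H. Qed.
Lemma p_ne A : p A -> exists x, A x.
Proof.
  intros HA. destruct (classic (exists x, A x)) as [?|Hn]; [assumption|].
  exfalso. destruct Hu as (_&H&_). apply H.
  apply (p_mono A); [|assumption]. intros x Ax; apply Hn; eauto.
Qed.

Definition star (A : nat -> Prop) : nat -> Prop :=
  fun x => A x /\ 1 <= x /\ p (shift_set x A).

Definition closed (S : nat -> Prop) := forall x, S x -> p (shift_set x S).

Lemma star_p A : p A -> p (star A).
Proof.
  intros HA. pose proof (proj2 (Hi A) HA) as H. unfold ultra_add in H.
  unfold star. apply p_and; [assumption|].
  apply (p_mono _ _ (fun x Hx => conj (proj1 Hx) (proj2 Hx)) H).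
Qed.

Lemma star_closed A : closed (star A).
Proof.
  intros x (Ax & Hx1 & Hs). pose proof (proj2 (Hi _) Hs) as H. unfold ultra_add in H.
  unfold shift_set, star.
  apply (p_mono (fun y => (shift_set x A y) /\ (1 <= y /\ p (shift_set y (shift_set x A))))).
  - intros y (Hy1 & Hy2 & Hy3). unfold shift_set in *. split; [assumption|]. split; [lia|].
    revert Hy3; apply p_mono; intros z Hz; cbv beta in *; rewrite Nat.add_assoc in Hz; exact Hz.
  - apply p_and; assumption.
Qed.

Lemma closed_shift S x : closed S -> S x -> closed (shift_set x S).
Proof.
  intros Hc Sx y Hy. unfold shift_set in *. apply Hc in Hy.
  revert Hy; apply p_mono; intros z Hz; cbv beta in *; rewrite Nat.add_assoc; exact Hz.
Qed.

Lemma closed_and A B : closed A -> closed B -> closed (fun x => A x /\ B x).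
Proof.
  intros HA HB x [Ax Bx]. unfold shift_set. apply p_and; [apply HA|apply HB]; assumption.
Qed.

Variable D : nat -> nat -> Prop.
Hypothesis HD : forall i, p (D i).

Definition pick (A : nat -> Prop) : nat := epsilon (inhabits 0) A.

Fixpoint T (t : nat) : nat -> Prop :=
  match t with
  | 0 => star (D 0)
  | S t' => fun y => (T t' y /\ T t' (pick (T t') + y)) /\ star (D (S t')) y
  end.

Definition xs t := pick (T t).

Lemma T_inv t : p (T t) /\ closed (T t).
Proof.
  induction t; simpl.
  - split; [apply star_p, HD|apply star_closed].
  - destruct IHt as [Hp Hc].
    assert (Hx : T t (pick (T t))).
    { unfold pick. apply epsilon_spec. apply p_ne; assumption. }
    split.
    + apply p_and; [apply p_and|apply star_p, HD]; [assumption|].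
      apply (Hc _ Hx).
    + apply closed_and; [apply closed_and|apply star_closed]; [assumption|].
      apply (closed_shift _ _ Hc Hx).
Qed.

Lemma xs_in t : T t (xs t).
Proof. unfold xs, pick. apply epsilon_spec. apply p_ne, T_inv. Qed.

Lemma T_mono i j : i <= j -> forall y, T j y -> T i y.
Proof.
  intros H; induction H; intros y Hy; [assumption|].
  apply IHle. simpl in Hy. tauto.
Qed.

Lemma T_add i s : T (S i) s -> T i (xs i + s).
Proof. simpl. tauto. Qed.

Lemma T_D i y : T i y -> D i y /\ 1 <= y.
Proof. destruct i; simpl; unfold star; tauto. Qed.

Lemma claim (r e : nat -> nat) (F : nat -> bool) l : forall lo,
  (forall k, r k <= r (S k)) ->
  (forall k, lo <= k < lo + l -> F k = true -> r k <= e k < r (S k)) ->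
  sumf lo l (fun k => if F k then xs (e k) else 0) = 0 \/
  T (r lo) (sumf lo l (fun k => if F k then xs (e k) else 0)).
Proof.
  induction l; intros lo Hr He; simpl; [left; reflexivity|].
  destruct (IHl (S lo) Hr) as [H0|HT].
  { intros k Hk; apply He; lia. }
  - rewrite H0. destruct (F lo) eqn:Ef; [right|left; reflexivity].
    specialize (He lo ltac:(lia) Ef).
    rewrite Nat.add_0_r. apply (T_mono _ (e lo)); [lia|]. apply xs_in.
  - right. destruct (F lo) eqn:Ef.
    + specialize (He lo ltac:(lia) Ef).
      apply (T_mono _ (e lo)); [lia|]. apply T_add.
      apply (T_mono _ (r (S lo))); [lia|assumption].
    + simpl. apply (T_mono _ (r (S lo))); [apply Hr|assumption].
Qed.

End Construction.

Lemma off_ge (a : nat -> nat) n : (forall n, 1 <= n -> 1 <= a n) -> n <= sum_1_to n a.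
Proof. intros Ha; induction n; simpl; [lia|]. specialize (Ha (S n) ltac:(lia)). lia. Qed.

Lemma off_S (a : nat -> nat) k : 1 <= k -> sum_1_to k a = sum_1_to (pred k) a + a k.
Proof. destruct k; [lia|]. intros _. reflexivity. Qed.

Lemma D_p (p : (nat -> Prop) -> Prop) (C : nat -> nat -> Prop) :
  is_ultrafilter p -> (forall n, 1 <= n -> p (C n)) ->
  forall i, p (fun x => forall n, 1 <= n <= S i -> C n x).
Proof.
  intros Hu HC i. induction i.
  - apply (p_mono p Hu (C 1)); [|apply HC; lia].
    intros x Hx n Hn. replace n with 1 by lia. assumption.
  - apply (p_mono p Hu (fun x => (forall n, 1 <= n <= S i -> C n x) /\ C (S (S i)) x)).
    + intros x [H1 H2] n Hn. destruct (Nat.eq_dec n (S (S i))); [subst; assumption|].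
      apply H1; lia.
    + apply p_and; [assumption|assumption|apply HC; lia].
Qed.

Theorem theorem2p4
  (p : (nat -> Prop) -> Prop)
  (C : nat -> (nat -> Prop))
  (a : nat -> nat) :
  is_ultrafilter p ->
  idempotent p ->
  (forall n, 1 <= n -> p (C n)) ->
  (forall n, 1 <= n -> 1 <= a n) ->
  exists Y : nat -> nat -> nat,
    (* Y n = <Y n j>_{j=1}^{a n}, a sequence in N *)
    (forall n j, 1 <= n -> 1 <= j <= a n -> 1 <= Y n j) /\
    (forall n, 1 <= n -> FS_sub (a n) (Y n) (C n)) /\
    (* for every nonempty finite F ⊆ N (F ⊆ {1..N}, indicator F) with
       minimum m, and every choice g n ∈ {1..a n} of a term of Y n for
       n ∈ F, sum_{n in F} Y n (g n) ∈ C m *)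
    (forall (N : nat) (F : nat -> bool) (m : nat) (g : nat -> nat),
       1 <= m <= N -> F m = true ->
       (forall k, F k = true -> m <= k) ->
       (forall k, F k = true -> 1 <= g k <= a k) ->
       C m (sum_1_to N (fun k => if F k then Y k (g k) else 0))).
Proof.
  intros Hu Hi HC Ha.
  set (D := fun i x => forall n, 1 <= n <= S i -> C n x).
  assert (HD : forall i, p (D i)) by (apply D_p; assumption).
  set (off := fun n => sum_1_to (pred n) a).
  assert (Hoff : forall n, pred n <= off n) by (intros; apply off_ge; assumption).
  assert (TC : forall i y n, 1 <= n <= S i -> T p D i y -> C n y).
  { intros i y n Hn Hy. apply (T_D p D) in Hy. apply (proj1 Hy). assumption. }
  exists (fun n j => xs p D (off n + pred j)).
  split; [|split].
  - intros n j _ _. apply (proj2 (T_D p D _ _ (xs_in p Hu Hi D HD _))).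
  - intros n Hn H [j [Hj HHj]].
    rewrite sum_1_to_sumf.
    destruct (claim p Hu Hi D HD (fun j => off n + pred j) (fun j => off n + pred j) H (a n) 1)
      as [H0|HT].
    + intros k; lia.
    + intros k Hk _; lia.
    + exfalso.
      pose proof (sumf_ge 1 (a n) (fun k => if H k then xs p D (off n + pred k) else 0) j
        ltac:(lia)) as Hge. simpl in Hge. rewrite HHj in Hge.
      pose proof (proj2 (T_D p D _ _ (xs_in p Hu Hi D HD (off n + pred j)))). simpl in H0. lia.
    + apply (TC (off n + pred 1) _ n); [simpl; specialize (Hoff n); lia|exact HT].
  - intros N F m g Hm HFm Hmin Hg.
    rewrite sum_1_to_sumf.
    set (f := fun k => if F k then xs p D (off k + pred (g k)) else 0).
    replace N with (pred m + S (N - m)) by lia.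
    rewrite sumf_split.
    rewrite (sumf_zero 1 (pred m)).
    2:{ intros k Hk. unfold f. destruct (F k) eqn:E; [|reflexivity].
        apply Hmin in E. lia. }
    replace (1 + pred m) with m by lia. simpl plus.
    destruct (claim p Hu Hi D HD off (fun k => off k + pred (g k)) F (S (N - m)) m)
      as [H0|HT].
    + intros k. unfold off. destruct k; simpl; lia.
    + intros k Hk E. pose proof (Hg k E). unfold off.
      destruct k; [lia|]. simpl. lia.
    + exfalso. fold f in H0. simpl in H0. unfold f in H0. rewrite HFm in H0.
      pose proof (proj2 (T_D p D _ _ (xs_in p Hu Hi D HD (off m + pred (g m))))). lia.
    + fold f in HT. apply (TC (off m)); [specialize (Hoff m); lia|exact HT].
Qed.
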